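(* In the lookdown representation, for each $n$, the map $i\mapsto\tau((n,i))$ is non-increasing on $\{1,\dots,X_n\}$, where $\tau(v)=\inf\{m:D_m(v)=\emptyset\}$.
   Context: Data: $\tau\in\mathbb{N}\cup\{\infty\}$, positive integers $(X_n)_{n<\tau}$, vectors $k_n=(k_n(i))_{i=1}^{X_n}$ of nonnegative integers with $\sum_ik_n(i)=X_{n+1}$. $V_n=\{(n,i):1\le i\le X_n\}$. Lookdown representation: for each $n$ fix a partition $\xi_n$ of $\{1,\dots,X_{n+1}\}$ whose block sizes are the nonzero entries of $k_n$; let $(\sigma_n)$ be independent uniform random permutations of $\{1,\dots,X_{n+1}\}$; list the blocks of $\{\sigma_n(A):A\in\xi_n\}$ in increasing order of least element as $B_1,\dots,B_{\ell_n}$; edges are $((n,i),(n+1,j))$, $j\in B_i$. For $v\in V_n$, $m\ge n$, $D_m(v)$ denotes the descendants of $v$ in generation $m$ (empty if $m\ge\tau$); $\inf\emptyset=\infty$. *)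

(* Defs.v *)
From mathcomp Require Import all_boot all_fingroup.
Set Implicit Arguments. Unset Strict Implicit. Unset Printing Implicit Defensive.

(* tau : option nat, None = infinity; generation n exists iff alive tau n. *)
Definition alive (tau : option nat) (n : nat) : bool :=
  if tau is Some t then n < t else true.

Definition minlab N (A : {set 'I_N}) : nat := \big[minn/N]_(j in A) (val j).

Definition ld_blocks N (xi : {set {set 'I_N}}) (s : {perm 'I_N}) : seq {set 'I_N} :=
  sort (fun A B => minlab A <= minlab B) [seq [set s x | x in A] | A : {set 'I_N} <- enum xi].

(* Labels are 1-indexed natural numbers as in the paper: vertex (n,i), 1 <= i <= X n.
   Label j of generation n+1 corresponds to the ordinal j-1 of 'I_(X n.+1).
   Edge ((n,i),(n+1,j)) iff j in B_i (the i-th block, 1-indexed). *)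
Definition ld_edge (X : nat -> nat) (xi : forall n, {set {set 'I_(X n.+1)}})
  (sigma : forall n, {perm 'I_(X n.+1)}) (n i j : nat) : bool :=
  (0 < i <= X n) && (0 < j) &&
  [exists j' : 'I_(X n.+1),
     (val j' == j.-1) && (j' \in nth set0 (ld_blocks (xi n) (sigma n)) i.-1)].

(* ld_desc n i d j : (n+d, j) is a descendant of (n, i) *)
Fixpoint ld_desc (X : nat -> nat) (xi : forall n, {set {set 'I_(X n.+1)}})
  (sigma : forall n, {perm 'I_(X n.+1)}) (n i d j : nat) : bool :=
  match d with
  | 0 => (0 < i <= X n) && (j == i)
  | d'.+1 => has (fun l => @ld_desc X xi sigma n i d' l && @ld_edge X xi sigma (n + d') l j)
                 (iota 1 (X (n + d')))
  end.

Definition ld_D X xi sigma (n i m : nat) : seq nat :=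
  [seq j <- iota 1 (X m) | @ld_desc X xi sigma n i (m - n) j].

(* extended naturals N u {oo}: None = oo *)
Definition le_ext (a b : option nat) : Prop :=
  match a, b with
  | _, None => True
  | None, Some _ => False
  | Some x, Some y => x <= y
  end.

(* t = inf { m >= n : D_m((n,i)) = empty }, with inf of the empty set = oo *)
Definition vtau X xi sigma (n i : nat) (t : option nat) : Prop :=
  match t with
  | Some m => n <= m /\ @ld_D X xi sigma n i m = [::] /\
              (forall m', n <= m' -> @ld_D X xi sigma n i m' = [::] -> m <= m')
  | None => forall m, n <= m -> @ld_D X xi sigma n i m <> [::]
  end.

(* Main.v *)
Require Import Defs.
From mathcomp Require Import all_boot all_fingroup.
Set Implicit Arguments. Unset Strict Implicit. Unset Printing Implicit Defensive.

Lemma bigmin_le N (P : pred 'I_N) (s : seq 'I_N) x :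
  x \in s -> P x -> \big[minn/N]_(y <- s | P y) val y <= val x.
Proof.
elim: s => //= a s IH; rewrite inE big_cons => /orP[/eqP-> Px|xs Px].
  by rewrite Px geq_minl.
case: (P a); last exact: IH.
by rewrite geq_min IH ?orbT.
Qed.

Lemma bigmin_ex N (P : pred 'I_N) (s : seq 'I_N) x :
  x \in s -> P x -> exists2 y, P y & \big[minn/N]_(y <- s | P y) val y = val y.
Proof.
elim: s x => //= a s IH x; rewrite inE big_cons => /orP[/eqP-> Px|xs Px].
  rewrite Px. case: (boolP (has P s)) => [/hasP[z zs Pz]|hn].
    have [y Py ->] := IH z zs Pz.
    case: (leqP (val a) (val y)) => h.
      by exists a => //; rewrite (minn_idPl h).
    by exists y => //; rewrite (minn_idPr (ltnW h)).
  exists a => //. rewrite big_seq_cond big_pred0.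
    by apply/minn_idPl; rewrite ltnW.
  move=> z; apply/negP=> /andP[zs Pz]; move/hasPn: hn => /(_ z zs); by rewrite Pz.
have [y Py e] := IH x xs Px.
case: (boolP (P a)) => Pa; last by exists y.
case: (leqP (val a) (val y)) => h.
  by exists a => //; rewrite e (minn_idPl h).
by exists y => //; rewrite e (minn_idPr (ltnW h)).
Qed.

Lemma minlab_le N (A : {set 'I_N}) x : x \in A -> minlab A <= val x.
Proof. by move=> xA; rewrite /minlab; apply: bigmin_le; rewrite ?mem_index_enum. Qed.

Lemma minlab_ex N (A : {set 'I_N}) x : x \in A -> exists2 y, y \in A & minlab A = val y.
Proof. by move=> xA; rewrite /minlab; apply: bigmin_ex (mem_index_enum x) xA. Qed.

Lemma step (X : nat -> nat) (xi : forall n, {set {set 'I_(X n.+1)}})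
  (sigma : forall n, {perm 'I_(X n.+1)}) :
  (forall n, 0 < X n -> set0 \notin xi n) ->
  forall n l l' j', 0 < l <= l' -> @ld_edge X xi sigma n l' j' ->
  exists2 j, j <= j' & @ld_edge X xi sigma n l j.
Proof.
move=> Hp n l l' j' /andP[l0 ll'].
move=> /andP[/andP[/andP[l'0 l'X] j'0] /existsP[j0 /andP[/eqP vj0 j0B]]].
set bs := ld_blocks (xi n) (sigma n) in j0B *.
have sz : l'.-1 < size bs.
  rewrite ltnNge; apply/negP => h; move: j0B; by rewrite nth_default // inE.
have szl : l.-1 < size bs by apply: leq_ltn_trans sz; rewrite -!subn1 leq_sub2r.
have ne : forall B, B \in bs -> exists x, x \in B.
  move=> B; rewrite /bs /ld_blocks mem_sort => /mapP[A]; rewrite mem_enum => Axi ->.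
  have : A != set0 by apply: contraNneq (Hp n (leq_trans l'0 l'X)) => <-.
  case/set0Pn => x xA; exists (sigma n x); exact: imset_f.
have so : sorted (fun A B : {set 'I_(X n.+1)} => minlab A <= minlab B) bs.
  by apply: sort_sorted => A B; apply: leq_total.
have mono := sorted_leq_nth (leT := fun A B : {set 'I_(X n.+1)} => minlab A <= minlab B)
  (fun b a c h1 h2 => leq_trans h1 h2) (fun a => leqnn _) set0 so l.-1 l'.-1 szl sz.
have /mono le1 : l.-1 <= l'.-1 by rewrite -!subn1 leq_sub2r.
have [x xB] := ne _ (mem_nth set0 szl).
have [y yB ey] := minlab_ex xB.
exists (val y).+1.
  have := leq_trans le1 (minlab_le j0B); rewrite ey vj0 => h.
  by rewrite -(prednK j'0) ltnS.
rewrite /ld_edge l0 (leq_trans ll' l'X) /=; apply/existsP; exists y; by rewrite eqxx.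
Qed.

Lemma desc_pos (X : nat -> nat) (xi : forall n, {set {set 'I_(X n.+1)}})
  (sigma : forall n, {perm 'I_(X n.+1)}) n i d j :
  @ld_desc X xi sigma n i d j -> 0 < j <= X (n + d).
Proof.
case: d => [|d] /=.
  by rewrite addn0 => /andP[h /eqP->].
case/hasP => l _ /andP[_ /andP[/andP[_ j0] /existsP[y /andP[/eqP vy _]]]].
rewrite j0 addnS /= -(prednK j0) -vy; exact: ltn_ord.
Qed.

Lemma desc_mono (X : nat -> nat) (xi : forall n, {set {set 'I_(X n.+1)}})
  (sigma : forall n, {perm 'I_(X n.+1)}) :
  (forall n, 0 < X n -> set0 \notin xi n) ->
  forall n i i', 0 < i <= i' -> i' <= X n ->
  forall d j', @ld_desc X xi sigma n i' d j' ->
  exists2 j, j <= j' & @ld_desc X xi sigma n i d j.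
Proof.
move=> Hp n i i' /andP[i0 ii'] i'X; elim=> [|d IH] j' /=.
  move=> /andP[_ /eqP->]; exists i => //; by rewrite i0 (leq_trans ii' i'X) eqxx.
case/hasP => l _ /andP[dl el].
have [l0 l0l dl0] := IH l dl.
have /andP[l00 _] := desc_pos dl0.
have [c cj' ec] := step Hp (introT andP (conj l00 l0l)) el.
exists c => //; apply/hasP; exists l0; last by rewrite dl0 ec.
move: ec => /andP[/andP[/andP[a b] _] _]; by rewrite mem_iota a add1n ltnS.
Qed.

Theorem corollary4p2 (tau : option nat) (X : nat -> nat) (k : nat -> nat -> nat)
  (xi : forall n, {set {set 'I_(X n.+1)}}) (sigma : forall n, {perm 'I_(X n.+1)}) :
  (forall n, alive tau n -> 0 < X n) ->
  (forall n, ~~ alive tau n -> X n = 0) ->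
  (forall n, alive tau n -> \sum_(1 <= i < (X n).+1) k n i = X n.+1) ->
  (forall n, alive tau n ->
     partition (xi n) [set: 'I_(X n.+1)] /\
     perm_eq [seq #|A| | A : {set 'I_(X n.+1)} <- enum (xi n)] [seq k n i | i <- iota 1 (X n) & 0 < k n i]) ->
  forall n, alive tau n ->
  forall i i', 1 <= i <= i' -> i' <= X n ->
  forall t t', @vtau X xi sigma n i t -> @vtau X xi sigma n i' t' -> le_ext t' t.
Proof.
move=> _ H2 _ H4 n _ i i' ii' i'X t t'.
have Hp : forall n, 0 < X n -> set0 \notin xi n.
  move=> m Xm; case: (boolP (alive tau m)) => al.
    by have [/and3P[_ _ ->] _] := H4 m al.
  by move: Xm; rewrite H2.
case: t => [m|]; last by case: t'.
move=> [nm [Dm minm]] Ht'.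
have Dm' : @ld_D X xi sigma n i' m = [::].
  case e: (@ld_D X xi sigma n i' m) => [|j' r] //.
  have : j' \in @ld_D X xi sigma n i' m by rewrite e mem_head.
  rewrite mem_filter => /andP[dj' _].
  have [j _ dj] := desc_mono Hp ii' i'X dj'.
  have := desc_pos dj; rewrite subnKC // => jX.
  have : j \in @ld_D X xi sigma n i m.
    by rewrite mem_filter dj mem_iota add1n ltnS.
  by rewrite Dm.
case: t' Ht' => [m'|] /=.
  move=> [_ [_ min']]; exact: min' nm Dm'.
by move=> /(_ m nm).
Qed.
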